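(* Let $G$ be the central product of normal subgroups $H,K$ ($G=HK$, $[H,K]=1$), $Z=H'\cap K'$, and $D$ a divisible abelian group with trivial action. Let $\theta':\operatorname{H}^2(G,D)\to \operatorname{H}^2(H,D)\oplus\operatorname{H}^2(K,D)\oplus\operatorname{Hom}(H\otimes K,D)$ be the homomorphism $\theta'=(\operatorname{res}^G_H,\operatorname{res}^G_K,\nu)$ defined in the context. Then there is an injective homomorphism $\chi:\operatorname{Hom}(Z,D)\to\operatorname{H}^2(G,D)$ such that the sequence $$0\to\operatorname{Hom}(Z,D)\xrightarrow{\chi}\operatorname{H}^2(G,D)\xrightarrow{\theta'}\operatorname{H}^2(H,D)\oplus\operatorname{H}^2(K,D)\oplus\operatorname{Hom}(H\otimes K,D)$$ is exact; in particular $\operatorname{Ker}(\theta')\cong\operatorname{Hom}(Z,D)$.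
   Context: $X\otimes Y$ denotes the abelian tensor product $X/X'\otimes_{\mathbb{Z}}Y/Y'$. For $\xi\in\operatorname{H}^2(G,D)$ represented by a 2-cocycle $f$ (values in $D$, written additively), $\nu(\xi)\in\operatorname{Hom}(H\otimes K,D)$ is given by $\nu(\xi)(hH'\otimes kK')=f(h,k)-f(k,h)$ for $h\in H$, $k\in K$. *)

(* Defs.v *)
(* D is a zmodType; the (possibly infinite) group G is an
   abstract group given by its carrier and operations (MathComp fingroups are
   finite only). *)
From HB Require Import structures.
From mathcomp Require Import all_boot all_algebra.
Set Implicit Arguments. Unset Strict Implicit. Unset Printing Implicit Defensive.
Import GRing.Theory.
Local Open Scope ring_scope.

Record grp := Grp {
  carrier :> Type;
  gmul : carrier -> carrier -> carrier;
  gone : carrier;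
  ginv : carrier -> carrier;
  gmulA : forall x y z, gmul x (gmul y z) = gmul (gmul x y) z;
  gmul1 : forall x, gmul gone x = x;
  gmulV : forall x, gmul (ginv x) x = gone }.

Section Defs.
Variable G : grp.
Notation "x * y" := (gmul x y) : grp_scope.
Local Open Scope grp_scope.

Definition is_subgroup (S : G -> Prop) : Prop :=
  S (gone G) /\ (forall x y, S x -> S y -> S (x * y)) /\
  (forall x, S x -> S (ginv x)).

Definition is_normal (S : G -> Prop) : Prop :=
  is_subgroup S /\ forall g x, S x -> S (ginv g * x * g).

Definition commg (x y : G) : G := ginv x * ginv y * x * y.

Inductive derived (S : G -> Prop) : G -> Prop :=
  | derived_one : derived S (gone G)
  | derived_comm x y : S x -> S y -> derived S (commg x y)
  | derived_mul x y : derived S x -> derived S y -> derived S (x * y)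
  | derived_inv x : derived S x -> derived S (ginv x).

Definition central_product (H K : G -> Prop) : Prop :=
  is_normal H /\ is_normal K /\
  (forall g, exists h k, H h /\ K k /\ g = h * k) /\
  (forall h k, H h -> K k -> h * k = k * h).

Variable D : zmodType.

Definition divisible : Prop :=
  forall (n : nat) (d : D), (0 < n)%N -> exists e : D, e *+ n = d.

Definition cocycle2 (f : G -> G -> D) : Prop :=
  forall x y z, f y z - f (x * y) z + f x (y * z) - f x y = 0.

(* f restricted to S x S is a 2-coboundary of S; for a 2-cocycle f of G this
   says res^G_S [f] = 0 in H^2(S,D). *)
Definition coboundary2_on (S : G -> Prop) (f : G -> G -> D) : Prop :=
  exists c : G -> D, forall x y, S x -> S y -> f x y = c y - c (x * y) + c x.

Definition coboundary2 (f : G -> G -> D) : Prop :=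
  coboundary2_on (fun _ => True) f.

Definition cohomologous (f g : G -> G -> D) : Prop :=
  coboundary2 (fun x y => f x y - g x y).

(* a : G -> D represents an element of Hom(Z,D) (only its values on Z matter). *)
Definition hom_on (Z : G -> Prop) (a : G -> D) : Prop :=
  forall x y, Z x -> Z y -> a (x * y) = a x + a y.

(* nu(f)(hH' (x) kK') = f(h,k) - f(k,h). *)
Definition nu (f : G -> G -> D) (h k : G) : D := f h k - f k h.

(* [f] lies in the kernel of theta' = (res^G_H, res^G_K, nu). Since H (x) K is
   generated by the elements hH' (x) kK', nu([f]) = 0 iff it vanishes on them. *)
Definition in_ker_theta' (H K : G -> Prop) (f : G -> G -> D) : Prop :=
  coboundary2_on H f /\ coboundary2_on K f /\
  (forall h k, H h -> K k -> nu f h k = 0).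

End Defs.

(* Main.v *)
Require Import Defs.
From HB Require Import structures.
From mathcomp Require Import all_boot all_algebra.
From mathcomp Require Import boolp.
Require mathcomp.classical.classical_sets.
From Stdlib Require Import ClassicalEpsilon Classical.
Import GRing.Theory.
Local Open Scope ring_scope.
Set Implicit Arguments. Unset Strict Implicit. Unset Printing Implicit Defensive.

Section GroupBasics.
Variable G : grp.
Local Notation "x ** y" := (@gmul G x y) (at level 40, left associativity).
Local Notation "1g" := (@gone G).
Local Notation "x ^-1g" := (@ginv G x) (at level 3).

Lemma mulgA' (x y z : G) : x ** (y ** z) = x ** y ** z. Proof. exact: gmulA. Qed.
Lemma mul1g' (x : G) : 1g ** x = x. Proof. exact: gmul1. Qed.
Lemma mulVg' (x : G) : x^-1g ** x = 1g. Proof. exact: gmulV. Qed.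

Lemma mulgV' (x : G) : x ** x^-1g = 1g.
Proof.
transitivity ((x^-1g)^-1g ** ((x^-1g ** x) ** x^-1g)).
  by rewrite !mulgA' mulVg' mul1g'.
by rewrite mulVg' mul1g' mulVg'.
Qed.

Lemma mulg1' (x : G) : x ** 1g = x.
Proof. by rewrite -(mulVg' x) mulgA' mulgV' mul1g'. Qed.

Lemma mulKg' (x y : G) : x^-1g ** (x ** y) = y.
Proof. by rewrite mulgA' mulVg' mul1g'. Qed.
Lemma mulVKg' (x y : G) : x ** (x^-1g ** y) = y.
Proof. by rewrite mulgA' mulgV' mul1g'. Qed.
Lemma mulgKV' (x y : G) : x ** y ** y^-1g = x.
Proof. by rewrite -mulgA' mulgV' mulg1'. Qed.
Lemma mulgVK' (x y : G) : x ** y^-1g ** y = x.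
Proof. by rewrite -mulgA' mulVg' mulg1'. Qed.

Lemma mulg_invl (x y : G) : y ** x = 1g -> y = x^-1g.
Proof. by move=> h; rewrite -(mulgKV' y x) h mul1g'. Qed.
Lemma mulg_invr (x y : G) : x ** y = 1g -> y = x^-1g.
Proof. by move=> h; rewrite -(mulKg' x y) h mulg1'. Qed.

Lemma invgK' (x : G) : (x^-1g)^-1g = x.
Proof. by symmetry; apply: mulg_invl; rewrite mulgV'. Qed.
Lemma invMg' (x y : G) : (x ** y)^-1g = y^-1g ** x^-1g.
Proof. by symmetry; apply: mulg_invl; rewrite mulgA' -(mulgA' _ (x^-1g)) mulVg' mulg1' mulVg'. Qed.
Lemma invg1' : (1g)^-1g = 1g.
Proof. by symmetry; apply: mulg_invl; rewrite mulg1'. Qed.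

Lemma gcancel_l (x y z : G) : x ** y = x ** z -> y = z.
Proof. by move=> h; rewrite -(mulKg' x y) h mulKg'. Qed.
Lemma gcancel_r (x y z : G) : y ** x = z ** x -> y = z.
Proof. by move=> h; rewrite -(mulgKV' y x) h mulgKV'. Qed.

Lemma sg1 (S : G -> Prop) : is_subgroup S -> S 1g. Proof. by case. Qed.
Lemma sgM (S : G -> Prop) : is_subgroup S -> forall x y, S x -> S y -> S (x ** y).
Proof. by case=> _ []. Qed.
Lemma sgV (S : G -> Prop) : is_subgroup S -> forall x, S x -> S (x^-1g).
Proof. by case=> _ []. Qed.

Lemma derived_sub (S : G -> Prop) : is_subgroup S -> forall x, derived S x -> S x.
Proof.
move=> hS x; elim=> [|a b Sa Sb|a b _ ha _ hb|a _ ha].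
- exact: sg1.
- rewrite /commg; do !apply: sgM => //; exact: sgV.
- exact: sgM.
- exact: sgV.
Qed.

Lemma derived_sg (S : G -> Prop) : is_subgroup S -> is_subgroup (derived S).
Proof.
move=> _; split; first exact: derived_one.
split; [exact: derived_mul | exact: derived_inv].
Qed.

Lemma sgI (S T : G -> Prop) : is_subgroup S -> is_subgroup T ->
  is_subgroup (fun x => S x /\ T x).
Proof.
move=> hS hT; split; first by split; apply: sg1.
split; first by move=> x y [] ? ? [] ? ?; split; apply: sgM.
by move=> x [] ? ?; split; apply: sgV.
Qed.

Lemma PoszS (n : nat) : Posz n.+1 = (Posz n + 1)%R.
Proof. by rewrite -addn1 PoszD. Qed.
Lemma NPoszS (n : nat) : (- Posz n.+1 = - Posz n - 1 :> int)%R.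
Proof. by rewrite PoszS opprD. Qed.

Definition npow (x : G) (n : nat) : G := iter n (fun y => y ** x) 1g.
Definition zpow (x : G) (z : int) : G :=
  match z with Posz n => npow x n | Negz n => npow (x^-1g) n.+1 end.

Lemma npowS (x : G) n : npow x n.+1 = npow x n ** x. Proof. by []. Qed.

Lemma zpowS (x : G) (z : int) : zpow x (z + 1) = zpow x z ** x.
Proof.
case: z => [n|n].
  have -> : (Posz n + 1 = Posz n.+1 :> int)%R by rewrite -addn1 PoszD.
  by [].
case: n => [|n].
  by rewrite /= mul1g' mulVg'.
have -> : (Negz n.+1 + 1 = Negz n)%R.
  by rewrite !NegzE -(addn1 n.+1) PoszD opprD subrK.
by rewrite /= mulgVK'.
Qed.

Lemma zpowSn (x : G) (z : int) : zpow x (z - 1) = zpow x z ** x^-1g.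
Proof. by rewrite -{2}(subrK 1 z) zpowS mulgKV'. Qed.

Lemma zpow0 (x : G) : zpow x 0 = 1g. Proof. by []. Qed.
Lemma zpow1 (x : G) : zpow x 1 = x. Proof. by rewrite /= mul1g'. Qed.

Lemma zpowD (x : G) (m n : int) : zpow x (m + n) = zpow x m ** zpow x n.
Proof.
elim/int_rec: n => [|n IH|n IH]; first by rewrite addr0 zpow0 mulg1'.
  by rewrite PoszS addrA !zpowS IH mulgA'.
by rewrite NPoszS addrA !zpowSn IH mulgA'.
Qed.

Lemma zpowN (x : G) (z : int) : zpow x (- z) = (zpow x z)^-1g.
Proof. by apply: mulg_invr; rewrite -zpowD subrr. Qed.

Lemma zpowM (x : G) (m n : int) : zpow x (m * n) = zpow (zpow x n) m.
Proof.
elim/int_rec: m => [|m IH|m IH]; first by rewrite mul0r.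
  by rewrite PoszS mulrDl mul1r zpowS zpowD IH.
by rewrite NPoszS mulrDl mulN1r zpowSn zpowD IH !zpowN.
Qed.

Lemma sg_zpow (S : G -> Prop) : is_subgroup S -> forall x z, S x -> S (zpow x z).
Proof.
move=> hS x z Sx; elim/int_rec: z => [|n IH|n IH]; first exact: sg1.
  by rewrite PoszS zpowS; apply: sgM.
by rewrite NPoszS zpowSn; apply: sgM => //; apply: sgV.
Qed.

End GroupBasics.


Section Homs.
Variables (G : grp) (D : zmodType).
Local Notation "x ** y" := (@gmul G x y) (at level 40, left associativity).
Local Notation "1g" := (@gone G).
Local Notation "x ^-1g" := (@ginv G x) (at level 3).

Lemma hom1 (S : G -> Prop) (c : G -> D) : is_subgroup S -> hom_on S c -> c 1g = 0.
Proof.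
move=> hS hc; have := hc _ _ (sg1 hS) (sg1 hS); rewrite mul1g' => h.
by apply: (addrI (c 1g)); rewrite addr0 -h.
Qed.

Lemma homV (S : G -> Prop) (c : G -> D) : is_subgroup S -> hom_on S c ->
  forall x, S x -> c (x^-1g) = - c x.
Proof.
move=> hS hc x Sx; have := hc _ _ (sgV hS Sx) Sx; rewrite mulVg' (hom1 hS hc).
by move=> /eqP; rewrite eq_sym addr_eq0 => /eqP.
Qed.

Lemma hom_zpow (S : G -> Prop) (c : G -> D) : is_subgroup S -> hom_on S c ->
  forall x z, S x -> c (zpow x z) = c x *~ z.
Proof.
move=> hS hc x z Sx; elim/int_rec: z => [|n IH|n IH].
- by rewrite zpow0 (hom1 hS hc) mulr0z.
- rewrite PoszS zpowS hc ?IH ?mulrzDr //; last exact: sg_zpow.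
- rewrite NPoszS zpowSn hc ?IH ?mulrzDr ?(homV hS hc) ?mulrNz //; [exact: sg_zpow|exact: sgV].
Qed.

Lemma hom_commg (S : G -> Prop) (c : G -> D) : is_subgroup S -> hom_on S c ->
  forall x y, S x -> S y -> c (Defs.commg x y) = 0.
Proof.
move=> hS hc x y Sx Sy; rewrite /Defs.commg.
have Sx' := sgV hS Sx; have Sy' := sgV hS Sy.
rewrite !hc ?(homV hS hc) //; try by do !apply: (sgM hS).
by rewrite addrAC subrK addNr.
Qed.

Lemma hom_derived (S : G -> Prop) (c : G -> D) : is_subgroup S -> hom_on S c ->
  forall x, derived S x -> c x = 0.
Proof.
move=> hS hc x; elim=> [|a b Sa Sb|a b da ha db hb|a da ha].
- exact: hom1 hS hc.
- exact: (hom_commg hS hc Sa Sb).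
- by rewrite hc ?ha ?hb ?addr0 //; apply: derived_sub.
- by rewrite (homV hS hc) ?ha ?oppr0 //; apply: derived_sub.
Qed.

End Homs.


Section Ext.
Variables (G : grp) (D : zmodType) (hD : divisible D).
Local Notation "x ** y" := (@gmul G x y) (at level 40, left associativity).
Local Notation "1g" := (@gone G).
Local Notation "x ^-1g" := (@ginv G x) (at level 3).
Variables (S T : G -> Prop) (b : G -> D).
Hypotheses (hS : is_subgroup S) (hT : is_subgroup T) (hST : forall x, S x -> T x)
  (hb : hom_on S b)
  (hcomm : forall x y, T x -> T y -> S (Defs.commg x y) /\ b (Defs.commg x y) = 0).

Definition good (p : (G -> Prop) * (G -> D)) :=
  is_subgroup p.1 /\ (forall x, S x -> p.1 x) /\ (forall x, p.1 x -> T x) /\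
  hom_on p.1 p.2 /\ (forall x, S x -> p.2 x = b x).

Lemma group_eq_aux (u a p q : G) : u ** a = p ** q -> p^-1g ** u = q ** a^-1g.
Proof.
move=> h; apply: (@gcancel_l _ p); rewrite mulVKg'.
by rewrite mulgA' -h mulgKV'.
Qed.

Section Step.
Variables (U : G -> Prop) (c : G -> D) (t : G).
Hypotheses (gU : good (U, c)) (Tt : T t) (nUt : ~ U t).

Let hU : is_subgroup U. Proof. by case: gU. Qed.
Let SU : forall x, S x -> U x. Proof. by case: gU => _ []. Qed.
Let UT : forall x, U x -> T x. Proof. by case: gU => _ [] _ []. Qed.
Let hc : hom_on U c. Proof. by case: gU => _ [] _ [] _ []. Qed.
Let cb : forall x, S x -> c x = b x. Proof. by case: gU => _ [] _ [] _ []. Qed.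

Lemma conj_U (g v : G) : T g -> U v -> U (g^-1g ** v ** g) /\ c (g^-1g ** v ** g) = c v.
Proof.
move=> Tg Uv; have [Scm bcm] := hcomm (UT Uv) Tg.
have e : g^-1g ** v ** g = v ** Defs.commg v g.
  by rewrite /Defs.commg !mulgA' mulgV' mul1g'.
rewrite e; split; first exact: (sgM hU Uv (SU Scm)).
rewrite hc //; last exact: SU. by rewrite (cb Scm) bcm addr0.
Qed.

Lemma exists_e : exists e : D, forall j, U (zpow t j) -> c (zpow t j) = e *~ j.
Proof.
have [[n [n0 Un]]|nex] := classic (exists n, (0 < n)%N /\ U (npow t n)).
  pose P := fun n => (0 < n)%N && `[< U (npow t n) >].
  have exP : exists n, P n by exists n; rewrite /P n0; apply/asboolP.
  case: (ex_minnP exP) => k /andP [k0 /asboolP Uk] kmin.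
  have [e he] := hD (c (npow t k)) k0.
  exists e => j Uj.
  have kz : (Posz k != 0) by rewrite eqz_nat -lt0n.
  have hj := divz_eq j k.
  set q := (j %/ k)%Z in hj; set r := (j %% k)%Z in hj.
  have r0 : (0 <= r)%R by apply: modz_ge0.
  have rk : (r < k)%R by apply: ltz_pmod; rewrite ltz_nat.
  have Utk : U (zpow t k) by [].
  have Uqk : U (zpow t (q * k)) by rewrite zpowM; apply: sg_zpow.
  have Ur : U (zpow t r).
    have -> : r = (j + - (q * k))%R by rewrite hj addrAC subrr add0r.
    by rewrite zpowD zpowN; apply: (sgM hU) => //; apply: sgV.
  have rz : r = 0.
    have er : r = Posz `|r|%N by rewrite gez0_abs.
    move: rk Ur; rewrite er ltz_nat; case: `|r|%N => // r' rk Ur.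
    have : (k <= r'.+1)%N by apply: kmin; rewrite /P /=; apply/asboolP.
    by rewrite leqNgt rk.
  rewrite hj rz addr0 zpowM (hom_zpow hU hc) //.
  by rewrite -[c (zpow t k)]/(c (npow t k)) -he pmulrn mulrzA_C.
exists 0 => j Uj; rewrite mul0rz.
have j0 : j = 0.
  case: j Uj => [n|n] Uj.
    case: n Uj => // n Uj; exfalso; apply: nex; exists n.+1; split => //.
  exfalso; apply: nex; exists n.+1; split => //.
  have := sgV hU Uj; rewrite -zpowN NegzE opprK.
  by [].
by rewrite j0 zpow0 (hom1 hU hc).
Qed.


Lemma step : exists V c', good (V, c') /\ (forall x, U x -> V x) /\
  (forall x, U x -> c' x = c x) /\ V t.
Proof.
have [e he] := exists_e.
pose V := fun x => exists u j, U u /\ x = u ** zpow t j.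
pose c' := fun x => let pr := epsilon (inhabits (1g, 0%R))
   (fun pr : G * int => U pr.1 /\ x = pr.1 ** zpow t pr.2) in c pr.1 + e *~ pr.2.
have Tz : forall j, T (zpow t j) by move=> j; apply: sg_zpow.
have cval : forall u j, U u -> c' (u ** zpow t j) = c u + e *~ j.
  move=> u j Uu; rewrite /c'.
  have ex : exists pr : G * int, U pr.1 /\ u ** zpow t j = pr.1 ** zpow t pr.2.
    by exists (u, j).
  case: (epsilon_spec (inhabits (1g, 0%R)) _ ex).
  move: (epsilon _ _) => [p k] /= Up eq.
  have := group_eq_aux eq; rewrite -zpowN -zpowD => eq2.
  have Uz : U (zpow t (k - j)) by rewrite -eq2; apply: (sgM hU) => //; apply: sgV.
  have := he _ Uz; rewrite -eq2 hc ?(homV hU hc) //; last exact: sgV.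
  rewrite mulrzBr => h.
  have h' : c u = c p + (e *~ k - e *~ j) by rewrite -h addNKr.
  by rewrite h' -addrA subrK.
have UV : forall x, U x -> V x by move=> x Ux; exists x, 0; rewrite zpow0 mulg1'.
have cU : forall x, U x -> c' x = c x.
  by move=> x Ux; rewrite -{1}(mulg1' x) -(zpow0 t) cval // mulr0z addr0.
have hV : is_subgroup V.
  split; first exact: UV (sg1 hU).
  split.
    move=> x y [u [m [Uu ->]]] [v [n [Uv ->]]].
    have [Uw cw] := conj_U (sgV hT (Tz m)) Uv.
    exists (u ** ((zpow t m)^-1g^-1g ** v ** (zpow t m)^-1g)), (m + n); split.
      exact: (sgM hU Uu Uw).
    by rewrite invgK' zpowD !mulgA' mulgVK'.
  move=> x [u [m [Uu ->]]].
  have [Uw cw] := conj_U (Tz m) (sgV hU Uu).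
  exists ((zpow t m)^-1g ** u^-1g ** zpow t m), (- m); split => //.
  by rewrite zpowN invMg' mulgKV'.
have hc' : hom_on V c'.
  move=> x y [u [m [Uu ->]]] [v [n [Uv ->]]].
  have [Uw cw] := conj_U (sgV hT (Tz m)) Uv.
  have -> : u ** zpow t m ** (v ** zpow t n) =
     u ** ((zpow t m)^-1g^-1g ** v ** (zpow t m)^-1g) ** zpow t (m + n).
    by rewrite invgK' zpowD !mulgA' mulgVK'.
  rewrite (cval _ _ (sgM hU Uu Uw)) (cval _ _ Uu) (cval _ _ Uv) (hc Uu Uw) cw.
  by rewrite mulrzDr addrACA.
have gV : good (V, c').
  rewrite /good /=; split => //; split; first by move=> x Sx; apply: UV; apply: SU.
  split; first by move=> x [u [j [Uu ->]]]; apply: (sgM hT); [apply: UT|].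
  split => //.
  by move=> x Sx; rewrite cU ?cb //; apply: SU.
exists V, c'; split => //; split => //; split => //.
exists 1g, 1; split; first exact: sg1 hU.
by rewrite zpow1 mul1g'.
Qed.

End Step.

Lemma extend_hom : exists b', hom_on T b' /\ (forall x, S x -> b' x = b x).
Proof.
pose P := {p : (G -> Prop) * (G -> D) | good p}.
have g0 : good (S, b).
  split => //; split => //; split => //; split => //.
pose p0 : P := exist _ (S, b) g0.
pose Rp := fun p q : P => (forall x, (sval p).1 x -> (sval q).1 x) /\
   (forall x, (sval p).1 x -> (sval q).2 x = (sval p).2 x).
pose R := fun p q : P => `[< Rp p q >].
have RP : forall p q, R p q <-> Rp p q by move=> p q; split => /asboolP.
have gp : forall p : P, good (sval p) by move=> [].
have [m mmax] : exists m, classical_sets.premaximal (fun x y => R x y) m.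
  apply: (classical_sets.ZL_preorder p0).
  - by move=> p; apply/RP; split.
  - move=> p q r /RP [pq1 pq2] /RP [qr1 qr2]; apply/RP; split.
      by move=> x /pq1 /qr1.
    by move=> x px; rewrite qr2 ?pq2 //; apply: pq1.
  move=> A totA.
  pose V := fun x => S x \/ exists p, A p /\ (sval p).1 x.
  pose cV := fun x => (sval (epsilon (inhabits p0) (fun p => A p /\ (sval p).1 x))).2 x.
  have cVspec : forall p x, A p -> (sval p).1 x -> cV x = (sval p).2 x.
    move=> p x Ap px; rewrite /cV.
    have ex : exists p, A p /\ (sval p).1 x by exists p.
    case: (epsilon_spec (inhabits p0) _ ex); move: (epsilon _ _) => q Aq qx.
    case: (totA _ _ Ap Aq) => /RP [h1 h2]; first by rewrite h2.
    by rewrite h2.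
  have cVS : forall x, S x -> cV x = b x.
    move=> x Sx; rewrite /cV; move: (epsilon _ _) => q.
    by case: (gp q) => _ [] _ [] _ [] _ h; apply: h.
  have common : forall x y, V x -> V y -> (S x /\ S y) \/
      exists p, A p /\ (sval p).1 x /\ (sval p).1 y.
    move=> x y [Sx|[p [Ap px]]] [Sy|[q [Aq qy]]].
    - by left.
    - by right; exists q; split => //; split => //; case: (gp q) => _ [] h _; exact: h.
    - by right; exists p; split => //; split => //; case: (gp p) => _ [] h _; exact: h.
    - case: (totA _ _ Ap Aq) => /RP [h1 _].
        by right; exists q; split => //; split => //; apply: h1.
      by right; exists p; split => //; split => //; apply: h1.
  have hV : is_subgroup V.
    split; first by left; apply: sg1.
    split.
      move=> x y Vx Vy; case: (common _ _ Vx Vy) => [[Sx Sy]|[p [Ap [px py]]]].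
        by left; apply: sgM.
      by right; exists p; split => //; case: (gp p) => [[_ [hm _]] _]; apply: hm.
    move=> x [Sx|[p [Ap px]]]; first by left; apply: sgV.
    by right; exists p; split => //; case: (gp p) => [[_ [_ hi]] _]; apply: hi.
  have gV : good (V, cV).
    rewrite /good /=; split => //; split; first by move=> x Sx; left.
    split; first by move=> x [Sx|[p [Ap px]]]; [apply: hST|case: (gp p) => _ [] _ [] h _; exact: h].
    split; last by move=> x Sx; rewrite cVS.
    move=> x y Vx Vy; case: (common _ _ Vx Vy) => [[Sx Sy]|[p [Ap [px py]]]].
      by rewrite !cVS ?hb //; exact: (sgM hS Sx Sy).
    have hp : is_subgroup (sval p).1 by case: (gp p).
    rewrite !(cVspec p) //; last exact: sgM.
    by case: (gp p) => _ [] _ [] _ [] ->.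
  exists (exist _ (V, cV) gV) => s As; apply/RP; split => /=.
    by move=> x sx; right; exists s.
  by move=> x sx; rewrite (cVspec s).
have UT : forall t, T t -> (sval m).1 t.
  move=> t Tt; apply: NNPP => nUt.
  have gm : good ((sval m).1, (sval m).2) by case: (gp m); case: (sval m).
  have [V [c' [gV [UV [cU Vt]]]]] := step gm Tt.
  have := mmax (exist _ (V, c') gV); rewrite /= => h.
  have [h1 _] : Rp (exist _ (V, c') gV) m.
    by apply/RP; apply: h; apply/RP; split => //= x ux; rewrite cU.
  by apply: nUt; apply: h1.
exists (sval m).2; split.
  by move=> x y Tx Ty; case: (gp m) => _ [] _ [] _ [] hm _; apply: hm; apply: UT.
by case: (gp m) => _ [] _ [] _ [].
Qed.

End Ext.


Section Zm. Variable D : zmodType.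
Lemma zA1 (a b c : D) : a - (b + c) = - c - - a + - b.
Proof. by rewrite opprK opprD addrA (addrC (-c)) addrAC. Qed.
Lemma zA2 (a b c : D) : - a + (b + c) = c - a + b.
Proof. by rewrite (addrC b) addrCA addrA. Qed.
Lemma zsum (a b c a' b' c' : D) :
  (a - b + c) + (a' - b' + c') = (a + a') - (b + b') + (c + c').
Proof. by rewrite [LHS]addrACA; congr (_ + _); rewrite addrACA opprD. Qed.
Lemma zinj1 (y x z a b e : D) : y - x + z = a - (b + e) -> x + a = (z + b) + (y + e).
Proof.
move=> h; have ha : a = y - x + z + (b + e) by rewrite h subrK.
by rewrite ha (addrAC y) (addrAC (y + z)) addrC addNKr (addrC y) addrACA.
Qed.
Lemma zinj2 (y x z a b e : D) : y - x + z = - a + (b + e) -> x - a = (z - b) + (y - e).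
Proof.
move=> h; have ha : - a = y - x + z - (b + e) by rewrite h addrK.
by rewrite ha (addrAC y) (addrAC (y + z)) addrC addNKr opprD (addrC y) addrACA.
Qed.
Lemma zinj3 (x a b : D) : x + a = 0 -> x - b = 0 -> b + a = 0.
Proof. by move=> h1 /subr0_eq <-. Qed.
Lemma zassoc (a b c A1 A2 A3 A4 : D) : A1 - A2 + A3 - A4 = 0 ->
  a + b + A4 + c + A2 = a + (b + c + A1) + A3.
Proof.
move=> /subr0_eq h; have e3 : A3 = A4 - (A1 - A2) by rewrite -h addrAC subrr add0r.
by rewrite e3 opprB -[RHS]addrA addrACA (addrCA A1) subrr addr0 (addrAC b) !addrA.
Qed.
Lemma zsH (x y z : D) : - x + - y + (y - z + x) = - z.
Proof. by rewrite (addrAC y) addrA -opprD (addrC y) addNr add0r. Qed.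
Lemma zfin (A1 A2 A12 F X : D) : A1 + A2 + F = A12 + X -> F - X = - A2 - - A12 + - A1.
Proof.
move=> h; have hF : F = A12 + X - (A1 + A2) by rewrite -h addrC addKr.
by rewrite hF addrAC addrK opprK opprD (addrC (-A2)) -addrA (addrC (-A2)).
Qed.
End Zm.

Section Main.
Variables (G : grp) (H K : G -> Prop) (D : zmodType).
Hypotheses (hc : central_product H K) (hD : divisible D).
Local Notation "x ** y" := (@gmul G x y) (at level 40, left associativity).
Local Notation "1g" := (@gone G).
Local Notation "x ^-1g" := (@ginv G x) (at level 3).

Let hH : is_subgroup H. Proof. by case: hc => [[]]. Qed.
Let hK : is_subgroup K. Proof. by case: hc => _ [[]]. Qed.
Let decomp : forall g, exists h k, H h /\ K k /\ g = h ** k.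
Proof. by case: hc => _ [] _ []. Qed.
Let commHK : forall h k, H h -> K k -> h ** k = k ** h.
Proof. by case: hc => _ [] _ []. Qed.

Definition Aset (x : G) := H x /\ K x.
Definition Zset (x : G) := derived H x /\ derived K x.

Lemma mul4 (a b c d : G) : b ** c = c ** b -> a ** b ** (c ** d) = a ** c ** (b ** d).
Proof. by move=> e; rewrite !mulgA' -(mulgA' a) e mulgA'. Qed.

Lemma hA : is_subgroup Aset. Proof. exact: sgI. Qed.

Lemma Acentral a g : Aset a -> a ** g = g ** a.
Proof.
move=> [Ha Ka]; have [h [k [Hh [Kk ->]]]] := decomp g.
rewrite mulgA' -(commHK Hh Ka) -mulgA' (commHK Ha Kk) !mulgA'.
by [].
Qed.

Lemma ZA x : Zset x -> Aset x.
Proof. by case=> dH dK; split; apply: derived_sub. Qed.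

Lemma hZ : is_subgroup Zset.
Proof. exact: sgI (derived_sg hH) (derived_sg hK). Qed.

Definition pH (g : G) : G := epsilon (inhabits 1g) (fun h => H h /\ K (h^-1g ** g)).
Fact qK_key : unit. Proof. exact: tt. Qed.
Definition qK (g : G) : G := locked_with qK_key ((pH g)^-1g ** g).
Lemma qK_def g : qK g = (pH g)^-1g ** g. Proof. by rewrite /qK unlock. Qed.

Lemma pq_spec g : H (pH g) /\ K (qK g).
Proof.
rewrite qK_def /pH; have [h [k [Hh [Kk e]]]] := decomp g.
apply: (epsilon_spec (inhabits 1g) (fun h => H h /\ K (h^-1g ** g))).
by exists h; split => //; rewrite e mulKg'.
Qed.
Lemma Hp g : H (pH g). Proof. by case: (pq_spec g). Qed.
Lemma Kq g : K (qK g). Proof. by case: (pq_spec g). Qed.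
Lemma pq_eq g : pH g ** qK g = g. Proof. by rewrite qK_def mulVKg'. Qed.

Lemma Aq h : H h -> Aset (qK h).
Proof. by move=> Hh; split; [rewrite qK_def; apply: (sgM hH); [apply: (sgV hH); apply: Hp|] | apply: Kq]. Qed.
Lemma Ap k : K k -> Aset (pH k).
Proof.
move=> Kk; split; first exact: Hp.
have -> : pH k = k ** (qK k)^-1g by rewrite -{2}(pq_eq k) mulgKV'.
by apply: (sgM hK) => //; apply: sgV => //; apply: Kq.
Qed.


Definition W (g1 g2 : G) : G := (pH (g1 ** g2))^-1g ** (pH g1 ** pH g2).

Lemma W_q g1 g2 : W g1 g2 = qK (g1 ** g2) ** (qK g1 ** qK g2)^-1g.
Proof.
have e : pH (g1 ** g2) ** qK (g1 ** g2) = pH g1 ** pH g2 ** (qK g1 ** qK g2).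
  rewrite pq_eq -{1}(pq_eq g1) -{1}(pq_eq g2); apply: mul4.
  by rewrite (commHK (Hp g2) (Kq g1)).
have e' : qK (g1 ** g2) = (pH (g1 ** g2))^-1g ** (pH g1 ** pH g2 ** (qK g1 ** qK g2)).
  by rewrite -e mulKg'.
by rewrite /W e' [in RHS]mulgA' mulgKV'.
Qed.

Lemma AW g1 g2 : Aset (W g1 g2).
Proof.
split.
  by rewrite /W; apply: (sgM hH); [apply: sgV => //| apply: (sgM hH)]; apply: Hp.
rewrite W_q; apply: (sgM hK); first exact: Kq.
by apply: sgV => //; apply: (sgM hK); apply: Kq.
Qed.

Lemma shuffle (a b c w : G) : Aset w -> a ** (b ** c) ** w = a ** (b ** w) ** c.
Proof.
move=> Aw; rewrite !mulgA' -[a ** b ** c ** w]mulgA' -(Acentral c Aw).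
by rewrite mulgA'.
Qed.

Lemma W_assoc x y z : W x (y ** z) ** W y z = W (x ** y) z ** W x y.
Proof.
have Aw := AW x y; set w := W x y.
rewrite /W (mulgA' x y z) (shuffle _ _ _ Aw) /w /W !mulgA' mulgKV'.
by rewrite mulgKV'.
Qed.

Definition chi' (d : G -> D) (g1 g2 : G) : D := d (W g1 g2).

Lemma zmod_cocy (a b c e : D) : c + a = b + e -> a - b + c - e = 0.
Proof.
move=> h; rewrite (addrAC a) (addrC a) h.
by rewrite (addrAC b) subrr add0r subrr.
Qed.

Lemma chi_cocycle d : hom_on Aset d -> cocycle2 (chi' d).
Proof.
move=> hd x y z; rewrite /chi'; apply: zmod_cocy.
rewrite -!hd ?W_assoc //; exact: AW.
Qed.


Lemma homB (S : G -> Prop) (d : G -> D) : is_subgroup S -> hom_on S d ->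
  forall x y, S x -> S y -> d (x ** y^-1g) = d x - d y.
Proof. by move=> hS hd x y Sx Sy; rewrite hd ?(homV hS hd) //; apply: sgV. Qed.
Lemma homNB (S : G -> Prop) (d : G -> D) : is_subgroup S -> hom_on S d ->
  forall x y, S x -> S y -> d (x^-1g ** y) = - d x + d y.
Proof. by move=> hS hd x y Sx Sy; rewrite hd ?(homV hS hd) //; apply: sgV. Qed.

Lemma homW_H (d : G -> D) : hom_on H d -> forall g1 g2,
  d (W g1 g2) = - d (pH (g1 ** g2)) + (d (pH g1) + d (pH g2)).
Proof.
move=> hd g1 g2; rewrite /W (homNB hH hd) ?hd //; try apply: Hp.
by apply: (sgM hH); apply: Hp.
Qed.
Lemma homW_K (d : G -> D) : hom_on K d -> forall g1 g2,
  d (W g1 g2) = d (qK (g1 ** g2)) - (d (qK g1) + d (qK g2)).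
Proof.
move=> hd g1 g2; rewrite W_q (homB hK hd) ?hd //; try apply: Kq.
by apply: (sgM hK); apply: Kq.
Qed.
Lemma homW_AH (d : G -> D) : hom_on Aset d -> forall h1 h2, H h1 -> H h2 ->
  d (W h1 h2) = d (qK (h1 ** h2)) - (d (qK h1) + d (qK h2)).
Proof.
move=> hd h1 h2 H1 H2; have H12 : H (h1 ** h2) by apply: sgM.
rewrite W_q (homB hA hd) ?hd //; try (apply: Aq => //); apply: (sgM hA); exact: Aq.
Qed.
Lemma homW_AK (d : G -> D) : hom_on Aset d -> forall k1 k2, K k1 -> K k2 ->
  d (W k1 k2) = - d (pH (k1 ** k2)) + (d (pH k1) + d (pH k2)).
Proof.
move=> hd k1 k2 K1 K2; have K12 : K (k1 ** k2) by apply: sgM.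
rewrite /W (homNB hA hd) ?hd //; try (apply: Ap => //); apply: (sgM hA); exact: Ap.
Qed.

Lemma W_comm h k : H h -> K k -> W h k = W k h.
Proof.
move=> Hh Kk; rewrite /W (commHK Hh Kk).
by rewrite -(Acentral (pH h) (Ap Kk)).
Qed.

Lemma chi_in_ker d : hom_on Aset d -> in_ker_theta' H K (chi' d).
Proof.
move=> hd; split; last split.
- exists (fun g => - d (qK g)) => x y Hx Hy; rewrite /chi' homW_AH //; exact: zA1.
- exists (fun g => d (pH g)) => x y Kx Ky; rewrite /chi' homW_AK //; exact: zA2.
- by move=> h k Hh Kk; rewrite /nu /chi' W_comm // subrr.
Qed.

Lemma chi_cob (phi psi : G -> D) (f : G -> G -> D) : hom_on H phi -> hom_on K psi ->
  (forall x y, f x y = phi (W x y) + psi (W x y)) -> coboundary2 f.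
Proof.
move=> hphi hpsi hf; exists (fun g => phi (pH g) + - psi (qK g)) => x y _ _.
by rewrite hf homW_H // homW_K // zA2 zA1 zsum.
Qed.

Lemma chi_inj d : hom_on Aset d -> coboundary2 (chi' d) -> forall z, Zset z -> d z = 0.
Proof.
move=> hd [c hcob] z Zz; have [Hz Kz] := ZA Zz.
have hphi : hom_on H (fun g => c g + d (qK g)).
  move=> x y Hx Hy; apply: zinj1; rewrite -homW_AH // -hcob //.
have hpsi : hom_on K (fun g => c g - d (pH g)).
  move=> x y Kx Ky; apply: zinj2; rewrite -homW_AK // -hcob //.
have /= e1 := hom_derived hH hphi (proj1 Zz).
have /= e2 := hom_derived hK hpsi (proj2 Zz).
rewrite -(pq_eq z) hd; [exact: zinj3 e1 e2 | exact: Ap | exact: Aq].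
Qed.


Lemma commA x y : Aset x -> Aset y -> Defs.commg x y = 1g.
Proof.
move=> Ax Ay; rewrite /Defs.commg -(mulgA' x^-1g) -(Acentral (y^-1g) Ax).
by rewrite mulKg' mulVg'.
Qed.

Lemma ext_A (S0 : G -> Prop) (a : G -> D) : is_subgroup S0 ->
  (forall x, S0 x -> Aset x) -> hom_on S0 a ->
  exists b, hom_on Aset b /\ forall x, S0 x -> b x = a x.
Proof.
move=> hS0 SA ha; apply: (extend_hom hD hS0 hA SA ha) => x y Ax Ay.
by rewrite commA //; split; [exact: sg1 | exact: hom1 hS0 ha].
Qed.

Lemma prod_hom (P Q : G -> Prop) (w : G -> D) : is_subgroup P -> is_subgroup Q ->
  (forall x, Q x -> Aset x) -> hom_on Q w -> (forall x, P x -> Q x -> w x = 0) ->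
  exists u, is_subgroup (fun x => exists y z, P y /\ Q z /\ x = y ** z) /\
    hom_on (fun x => exists y z, P y /\ Q z /\ x = y ** z) u /\
    forall y z, P y -> Q z -> u (y ** z) = w z.
Proof.
move=> hP hQ QA hw wv.
pose u := fun x => w (epsilon (inhabits (1g, 1g))
   (fun yz : G * G => P yz.1 /\ Q yz.2 /\ x = yz.1 ** yz.2)).2.
have uval : forall y z, P y -> Q z -> u (y ** z) = w z.
  move=> y z Py Qz; rewrite /u.
  have ex : exists yz : G * G, P yz.1 /\ Q yz.2 /\ y ** z = yz.1 ** yz.2.
    by exists (y, z).
  case: (epsilon_spec (inhabits (1g, 1g)) _ ex).
  move: (epsilon _ _) => [y' z'] /= Py' [Qz' e].
  have e2 := group_eq_aux e.
  have : w (z' ** z^-1g) = 0.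
    apply: wv; first by rewrite -e2; apply: (sgM hP) => //; apply: sgV.
    by apply: (sgM hQ) => //; apply: sgV.
  by rewrite (homB hQ hw) // => /subr0_eq.
exists u; split; last split => //.
  split; first by exists 1g, 1g; split; [exact: sg1|split; [exact: sg1|by rewrite mul1g']].
  split.
    move=> x1 x2 [y1 [z1 [P1 [Q1 ->]]]] [y2 [z2 [P2 [Q2 ->]]]].
    exists (y1 ** y2), (z1 ** z2); split; first exact: sgM.
    split; first exact: sgM.
    by apply: mul4; rewrite (Acentral y2 (QA _ Q1)).
  move=> x [y [z [Py [Qz ->]]]]; exists y^-1g, z^-1g.
  split; first exact: sgV. split; first exact: sgV.
  by rewrite invMg' (Acentral (y^-1g) (sgV hA (QA _ Qz))).
move=> x1 x2 [y1 [z1 [P1 [Q1 ->]]]] [y2 [z2 [P2 [Q2 ->]]]].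
have -> : y1 ** z1 ** (y2 ** z2) = y1 ** y2 ** (z1 ** z2).
  by apply: mul4; rewrite (Acentral y2 (QA _ Q1)).
by rewrite !uval ?hw //; apply: sgM.
Qed.

Lemma ext_to (L : G -> Prop) (w : G -> D) : is_subgroup L ->
  (forall x, Aset x -> L x) -> hom_on Aset w ->
  (forall x, derived L x -> Aset x -> w x = 0) ->
  exists phi, hom_on L phi /\ forall a, Aset a -> phi a = w a.
Proof.
move=> hL AL hw wv.
have [u [hS [hu uval]]] := prod_hom (derived_sg hL) hA (fun x Ax => Ax) hw wv.
set S0 := fun x => _ in hS hu.
have S0L : forall x, S0 x -> L x.
  move=> x [y [a [dy [Aa ->]]]]; apply: (sgM hL); [exact: derived_sub|exact: AL].
have hcm : forall x y, L x -> L y -> S0 (Defs.commg x y) /\ u (Defs.commg x y) = 0.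
  move=> x y Lx Ly; have dc : derived L (Defs.commg x y) by apply: derived_comm.
  have S1 : S0 (Defs.commg x y ** 1g).
    by exists (Defs.commg x y), 1g; split => //; split => //; exact: sg1 hA.
  rewrite mulg1' in S1; split => //.
  by rewrite -(mulg1' (Defs.commg x y)) uval //; [exact: hom1 hA hw|exact: sg1 hA].
have [phi [hphi ephi]] := extend_hom hD hS hL S0L hu hcm.
exists phi; split => // a Aa.
have S1a : S0 (1g ** a) by exists 1g, a; split => //; exact: derived_one.
by rewrite -{1}(mul1g' a) ephi // uval //; exact: derived_one.
Qed.

Lemma decomp_hom (e : G -> D) : hom_on Aset e -> (forall z, Zset z -> e z = 0) ->
  exists phi psi, hom_on H phi /\ hom_on K psi /\
    forall a, Aset a -> e a = phi a + psi a.
Proof.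
move=> he ez.
pose X1 := fun x => derived H x /\ K x.
pose X2 := fun x => derived K x /\ H x.
have hX1 : is_subgroup X1 by apply: sgI => //; apply: derived_sg.
have hX2 : is_subgroup X2 by apply: sgI => //; apply: derived_sg.
have X2A : forall x, X2 x -> Aset x by move=> x [dx Hx]; split => //; exact: derived_sub.
have X1A : forall x, X1 x -> Aset x by move=> x [dx Kx]; split => //; exact: derived_sub.
have he2 : hom_on X2 e by move=> x y Xx Xy; apply: he; apply: X2A.
have [u [hM [hu uval]]] := prod_hom hX1 hX2 X2A he2
   (fun x X1x X2x => ez x (conj (proj1 X1x) (proj1 X2x))).
set M := fun x => _ in hM hu.
have MA : forall x, M x -> Aset x.
  move=> x [y [z [X1y [X2z ->]]]]; apply: (sgM hA); [exact: X1A|exact: X2A].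
have [u' [hu' eu']] := ext_A hM MA hu.
have u'X1 : forall x, X1 x -> u' x = 0.
  move=> x X1x; rewrite -(mulg1' x) eu'; last by exists x, 1g; split => //; split => //; exact: sg1 hX2.
  by rewrite uval //; [exact: hom1 hX2 he2 | exact: sg1 hX2].
have u'X2 : forall x, X2 x -> u' x = e x.
  move=> x X2x; rewrite -{1}(mul1g' x) eu'; last by exists 1g, x; split => //; exact: sg1 hX1.
  by rewrite uval //; exact: sg1 hX1.
have [phi [hphi ephi]] := ext_to hH (fun x Ax => proj1 Ax) hu'
   (fun x dx Ax => u'X1 x (conj dx (proj2 Ax))).
have hv : hom_on Aset (fun x => e x - u' x).
  by move=> x y Ax Ay; rewrite he // hu' // opprD addrACA.
have [psi [hpsi epsi]] := ext_to hK (fun x Ax => proj2 Ax) hv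
   (fun x dx Ax => etrans (congr1 (fun t => e x - t) (u'X2 x (conj dx (proj1 Ax)))) (subrr _)).
exists phi, psi; split => //; split => // a Aa.
by rewrite ephi // epsi // addrC subrK.
Qed.

Lemma chi_wd d1 d2 : hom_on Aset d1 -> hom_on Aset d2 ->
  (forall z, Zset z -> d1 z = d2 z) -> cohomologous (chi' d1) (chi' d2).
Proof.
move=> h1 h2 e12.
have he : hom_on Aset (fun x => d1 x - d2 x).
  by move=> x y Ax Ay; rewrite h1 // h2 // opprD addrACA.
have [phi [psi [hphi [hpsi ephi]]]] := decomp_hom he
   (fun z Zz => etrans (congr1 (fun t => d1 z - t) (esym (e12 z Zz))) (subrr _)).
apply: (chi_cob hphi hpsi) => x y.
by rewrite /chi' -ephi //; exact: AW.
Qed.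


Section Surj.
Variable f : G -> G -> D.
Hypothesis hcf : cocycle2 f.
Hypothesis hker : in_ker_theta' H K f.

Definition emul (X Y : G * D) : G * D := (X.1 ** Y.1, X.2 + Y.2 + f X.1 Y.1).

Lemma emul2 X Y : (emul X Y).2 = X.2 + Y.2 + f X.1 Y.1. Proof. by []. Qed.

Lemma eassoc X Y Z : emul (emul X Y) Z = emul X (emul Y Z).
Proof.
case: X => x a; case: Y => y b; case: Z => z c; rewrite /emul /=.
by congr pair; [rewrite mulgA' | apply: zassoc; apply: hcf].
Qed.

Lemma emid A B C E : emul B C = emul C B ->
  emul (emul A B) (emul C E) = emul (emul A C) (emul B E).
Proof. by move=> e; rewrite !eassoc -(eassoc B) e eassoc. Qed.

Lemma fx1 x : f x 1g = f 1g 1g.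
Proof.
have := hcf x 1g 1g; rewrite !mulg1' subrK => /subr0_eq ->.
by [].
Qed.
Lemma f1x x : f 1g x = f 1g 1g.
Proof.
by have := hcf 1g 1g x; rewrite !mul1g' subrr add0r => /subr0_eq.
Qed.

Lemma ecentral X b : emul X (1g, b) = emul (1g, b) X.
Proof.
case: X => x a; rewrite /emul /=; congr pair; first by rewrite mulg1' mul1g'.
by rewrite fx1 f1x (addrC a).
Qed.

Let cH := projT1 (cid (proj1 hker)).
Let hcH : forall x y, H x -> H y -> f x y = cH y - cH (x ** y) + cH x.
Proof. exact: projT2 (cid (proj1 hker)). Qed.
Let cK := projT1 (cid (proj1 (proj2 hker))).
Let hcK : forall x y, K x -> K y -> f x y = cK y - cK (x ** y) + cK x.
Proof. exact: projT2 (cid (proj1 (proj2 hker))). Qed.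
Let hnu : forall h k, H h -> K k -> f h k = f k h.
Proof. by move=> h k Hh Kk; apply/subr0_eq; apply: (proj2 (proj2 hker)). Qed.

Definition sH h : G * D := (h, - cH h).
Definition sK k : G * D := (k, - cK k).

Lemma sH_mul h1 h2 : H h1 -> H h2 -> emul (sH h1) (sH h2) = sH (h1 ** h2).
Proof. by move=> H1 H2; rewrite /emul /sH /=; congr pair; rewrite hcH // zsH. Qed.
Lemma sK_mul k1 k2 : K k1 -> K k2 -> emul (sK k1) (sK k2) = sK (k1 ** k2).
Proof. by move=> K1 K2; rewrite /emul /sK /=; congr pair; rewrite hcK // zsH. Qed.
Lemma sHK h k : H h -> K k -> emul (sK k) (sH h) = emul (sH h) (sK k).
Proof.
move=> Hh Kk; rewrite /emul /sH /sK /=; congr pair; first by rewrite (commHK Hh Kk).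
by rewrite (addrC (- cK k)) (hnu Hh Kk).
Qed.

Definition sec g := emul (sH (pH g)) (sK (qK g)).
Definition dlt z := (emul (sH z) (sK z^-1g)).2.

Lemma sec1 g : (sec g).1 = g. Proof. exact: pq_eq. Qed.
Lemma Edef z : emul (sH z) (sK z^-1g) = (1g, dlt z).
Proof. by rewrite /dlt; case E: (emul _ _) => [x a] /=; move: E; rewrite /emul /= mulgV' => -[<-]. Qed.

Lemma sec_mul g1 g2 : emul (sec g1) (sec g2) = emul (sec (g1 ** g2)) (1g, dlt (W g1 g2)).
Proof.
have [AwH AwK] := AW g1 g2; set w := W g1 g2 in AwH AwK *.
have ep : pH g1 ** pH g2 = pH (g1 ** g2) ** w by rewrite /w /W mulVKg'.
have eq : qK g1 ** qK g2 = w^-1g ** qK (g1 ** g2).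
  by rewrite /w W_q invMg' invgK' mulgVK'.
rewrite /sec emid; last by apply: sHK; [exact: Hp | exact: Kq].
rewrite sH_mul ?sK_mul; try (exact: Hp); try (exact: Kq).
rewrite ep eq -sH_mul //; last exact: Hp.
rewrite -sK_mul //; [|exact: sgV|exact: Kq].
by rewrite eassoc -(eassoc (sH w)) Edef -ecentral eassoc.
Qed.

Definition dd z := dlt z + f 1g 1g.

Lemma dd_hom : hom_on Aset dd.
Proof.
move=> z1 z2 [H1 K1] [H2 K2].
have e : emul (emul (sH z1) (sK z1^-1g)) (emul (sH z2) (sK z2^-1g)) =
         emul (sH (z1 ** z2)) (sK (z1 ** z2)^-1g).
  rewrite emid; last by apply: sHK => //; exact: sgV.
  rewrite sH_mul // sK_mul; try exact: sgV.
  by rewrite invMg' (Acentral (z2^-1g) (sgV hA (conj H1 K1))).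
move: e; rewrite !Edef /emul /= => -[_ e].
by rewrite /dd -e -addrA [RHS]addrACA.
Qed.

Lemma chi_surj_aux : cohomologous f (chi' dd).
Proof.
exists (fun g => - (sec g).2) => x y _ _.
have e := congr1 snd (sec_mul x y).
rewrite (emul2 (sec x)) (emul2 (sec (x ** y))) !sec1 [(1g, _).2]/= [(1g, _).1]/= fx1 in e.
by rewrite /chi'; apply: zfin; rewrite /dd [RHS]addrA.
Qed.

End Surj.

Lemma chi_surj f : cocycle2 f -> in_ker_theta' H K f ->
  exists d, hom_on Aset d /\ cohomologous f (chi' d).
Proof. by move=> hcf hker; exists (dd hker); split; [exact: dd_hom | exact: chi_surj_aux]. Qed.

End Main.


Unset Implicit Arguments. Set Strict Implicit.

Lemma cohom_trans (G : grp) (D : zmodType) (f g h : G -> G -> D) :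
  cohomologous f g -> cohomologous g h -> cohomologous f h.
Proof.
move=> [c1 h1] [c2 h2]; exists (fun x => c1 x + c2 x) => x y _ _.
have -> : f x y - h x y = (f x y - g x y) + (g x y - h x y) by rewrite addrA subrK.
by rewrite h1 // h2 // zsum.
Qed.

Theorem theorem3p3 (G : grp) (H K : G -> Prop) (D : zmodType)
  (hc : central_product H K) (hD : divisible D) :
  let Z := fun x : G => derived H x /\ derived K x in
  exists chi : (G -> D) -> (G -> G -> D),
    (* chi lands in H^2(G,D) *)
    (forall a, hom_on Z a -> cocycle2 (chi a)) /\
    (* chi is well defined on Hom(Z,D) *)
    (forall a b, hom_on Z a -> hom_on Z b -> (forall z, Z z -> a z = b z) ->
       cohomologous (chi a) (chi b)) /\
    (* chi is a homomorphism *)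
    (forall a b, hom_on Z a -> hom_on Z b ->
       cohomologous (chi (fun x => a x + b x))
                    (fun x y => chi a x y + chi b x y)) /\
    (* chi is injective *)
    (forall a, hom_on Z a -> coboundary2 (chi a) -> forall z, Z z -> a z = 0) /\
    (* Im chi is contained in Ker theta' *)
    (forall a, hom_on Z a -> in_ker_theta' H K (chi a)) /\
    (* Ker theta' is contained in Im chi *)
    (forall f, cocycle2 f -> in_ker_theta' H K f ->
       exists a, hom_on Z a /\ cohomologous f (chi a)).
Proof.
move=> Z.
pose ext := fun a : G -> D => epsilon (inhabits a)
  (fun b => hom_on (Aset H K) b /\ forall z, Z z -> b z = a z).
have extP : forall a, hom_on Z a ->
    hom_on (Aset H K) (ext a) /\ forall z, Z z -> ext a z = a z.
  move=> a ha; apply: (epsilon_spec (inhabits a)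
    (fun b => hom_on (Aset H K) b /\ forall z, Z z -> b z = a z)).
  exact: (ext_A hc hD (hZ hc) (ZA hc) ha).
have hZA : forall d : G -> D, hom_on (Aset H K) d -> hom_on Z d.
  by move=> d hd x y Zx Zy; exact: (hd _ _ (ZA hc Zx) (ZA hc Zy)).
exists (fun a => chi' H K (ext a)).
split; first by move=> a ha; apply: (chi_cocycle hc (extP a ha).1).
split.
  move=> a b ha hb eab; apply: (chi_wd hc hD (extP a ha).1 (extP b hb).1) => z Zz.
  by rewrite (extP a ha).2 // (extP b hb).2 // eab.
split.
  move=> a b ha hb.
  have hab : hom_on Z (fun x => a x + b x).
    by move=> x y Zx Zy; rewrite ha // hb // addrACA.
  have hs : hom_on (Aset H K) (fun x => ext a x + ext b x).
    move=> x y Ax Ay; rewrite (extP a ha).1 // (extP b hb).1 //.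
    by rewrite addrACA.
  apply: (chi_wd hc hD (extP _ hab).1 hs) => z Zz.
  by rewrite (extP _ hab).2 // (extP a ha).2 // (extP b hb).2.
split.
  move=> a ha hcob z Zz.
  by rewrite -(extP a ha).2 //; apply: (chi_inj hc (extP a ha).1 hcob).
split; first by move=> a ha; apply: (chi_in_ker hc (extP a ha).1).
move=> f hf hk; have [d [hd hcoh]] := chi_surj hc hf hk.
exists d; split; first exact: hZA.
apply: (cohom_trans _ _ _ _ _ hcoh); apply: (chi_wd hc hD hd (extP d (hZA d hd)).1) => z Zz.
by rewrite (extP d (hZA d hd)).2.
Qed.
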